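(* For every integer $N\ge 0$, let $T_{2\times 3}(7,N)$ be the number of tilings of a $7\times n$ rectangle, $n=6N/7$, by $N$ tiles of size $2\times 3$ (and $0$ if $6N/7\notin\mathbb{Z}$). Then, as formal power series, \[ \sum_{N\ge 0} T_{2\times 3}(7,N)\,z^N=\frac{1}{1-3z^7}. \]
   Context: A tiling of an $m\times n$ rectangle (width $m$, length $n$, made of $mn$ unit squares) by $a\times b$ tiles is a partition of the rectangle into non-overlapping axis-parallel $a\times b$ rectangles with integer corner coordinates, each placed in either of its two orientations. Tilings related by reflections or rotations of the rectangle are counted as distinct. The empty tiling counts once for $N=0$. *)

(* Defs.v *)
From mathcomp Require Import all_boot.
Set Implicit Arguments. Unset Strict Implicit. Unset Printing Implicit Defensive.

(* A tile placement in the m x n rectangle (rows 'I_m = width m, columns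
   'I_n = length n): lower corner (x, y) and an orientation bit o. *)
Definition tile_dims (a b : nat) (o : bool) : nat * nat :=
  if o then (b, a) else (a, b).

Definition placement (m n : nat) := ('I_m * 'I_n * bool)%type.

(* the placed tile fits inside the rectangle; when a = b the two
   orientations coincide, so only orientation false is used *)
Definition valid_placement (m n a b : nat) (p : placement m n) : bool :=
  let: (x, y, o) := p in
  let: (h, w) := tile_dims a b o in
  [&& x + h <= m, y + w <= n & (a == b) ==> ~~ o].

Definition covers (m n a b : nat) (p : placement m n) (i : 'I_m) (j : 'I_n) : bool :=
  let: (x, y, o) := p in
  let: (h, w) := tile_dims a b o in
  [&& x <= i, i < x + h, y <= j & j < y + w].

Definition is_tiling (m n a b : nat) (S : {set placement m n}) : bool :=
  [forall p in S, valid_placement a b p] &&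
  [forall i : 'I_m, forall j : 'I_n, #|[set p in S | covers a b p i j]| == 1].

Definition ntilings (m n a b N : nat) : nat :=
  #|[set S : {set placement m n} | is_tiling a b S && (#|S| == N)]|.

Definition T_tilings (a b m N : nat) : nat :=
  if m %| a * b * N then ntilings m (a * b * N %/ m) a b N else 0.

(* Main.v *)
Require Import Defs.
From mathcomp Require Import all_boot.
Set Implicit Arguments. Unset Strict Implicit. Unset Printing Implicit Defensive.
Definition trip := (nat * nat * bool)%type.
Definition coversN (t : trip) (a b : nat) : bool :=
  let: (x, y, o) := t in
  let: (h, w) := tile_dims 2 3 o in
  [&& x <= a, a < x + h, y <= b & b < y + w].
Definition disjN (u t : trip) : bool :=
  let a := maxn u.1.1 t.1.1 in let b := maxn u.1.2 t.1.2 in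
  ~~ (coversN u a b && coversN t a b).
Definition firstk (L : nat) (K : seq trip) :=
  find (fun k => ~~ has (fun t => coversN t (k %% 7) (k %/ 7)) K) (iota 0 (7 * L)).
Definition okbr (K : seq trip) (i j : nat) (o : bool) :=
  (i + (tile_dims 2 3 o).1 <= 7) && all (disjN (i, j, o)) K.
Fixpoint search (fuel L : nat) (K : seq trip) : seq (seq trip) :=
  match fuel with 0 => [:: K] | fuel'.+1 =>
    let k := firstk L K in
    if k < 7 * L then
      let i := k %% 7 in let j := k %/ 7 in
      (if okbr K i j false then search fuel' L ((i, j, false) :: K) else [::]) ++
      (if okbr K i j true then search fuel' L ((i, j, true) :: K) else [::])
    else [:: K] end.
From mathcomp Require Import zify.

Definition hh (o : bool) := if o then 3 else 2.
Definition ww (o : bool) := if o then 2 else 3.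

Lemma coversNE x y o a b :
  coversN (x, y, o) a b = [&& x <= a, a < x + hh o, y <= b & b < y + ww o].
Proof. by case: o. Qed.

Definition tr (n : nat) (p : placement 7 n) : trip :=
  (nat_of_ord p.1.1, nat_of_ord p.1.2, p.2).
Definition shiftT (c : nat) (t : trip) : trip := (t.1.1, c + t.1.2, t.2).

Definition Tf (n c : nat) (S : {set placement 7 n}) : bool :=
  [forall p in S, valid_placement 2 3 p && (c <= p.1.2)] &&
  [forall i : 'I_7, forall j : 'I_n, #|[set p in S | covers 2 3 p i j]| == (c <= j)].

Definition inS (n : nat) (S : {set placement 7 n}) (t : trip) : bool :=
  [exists p in S, tr p == t].

Definition setOf (n : nat) (s : seq trip) : {set placement 7 n} := [set p | tr p \in s].

Definition tilesFrom (n c N : nat) : {set {set placement 7 n}} :=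
  [set S : {set placement 7 n} | Tf c S && (#|S| == N)].

Lemma covers_tr n (p : placement 7 n) i j : covers 2 3 p i j = coversN (tr p) i j.
Proof. by case: p => [[x y] o]. Qed.

Lemma tr_inj n : injective (@tr n).
Proof.
move=> [[x y] o] [[x' y'] o'] [] /val_inj -> /val_inj -> -> //.
Qed.

Lemma Tf_valid n c S (x : 'I_7) (y : 'I_n) o :
  Tf c S -> (x, y, o) \in S -> [/\ x + hh o <= 7, y + ww o <= n & c <= y].
Proof.
case/andP => /forall_inP H _ /H.
by case: o => /= /andP [/and3P [? ? _] ?].
Qed.

Lemma Tf_uniq n c S (p q : placement 7 n) a b :
  Tf c S -> p \in S -> q \in S -> coversN (tr p) a b -> coversN (tr q) a b -> p = q.
Proof.
move=> HT pS qS.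
case: p pS => [[x y] o] pS.
have [hx hy _] := Tf_valid HT pS.
change (tr (x, y, o)) with ((x : nat), (y : nat), o); rewrite coversNE => /and4P [h1 h2 h3 h4] Hq.
have ha : a < 7 by lia.
have hb : b < n by lia.
case/andP: HT => _ /forallP /(_ (Ordinal ha)) /forallP /(_ (Ordinal hb)) /eqP Hc.
have : #|[set p in S | covers 2 3 p (Ordinal ha) (Ordinal hb)]| <= 1 by rewrite Hc; case: (c <= _).
move/card_le1_eqP; apply; rewrite !inE covers_tr ?pS ?qS //=.
  by move: h2 h4; case: (o) => /= h2 h4; apply/and4P.
Qed.

Lemma Tf_ex n c S a b :
  Tf c S -> a < 7 -> c <= b -> b < n -> exists2 p : placement 7 n, p \in S & coversN (tr p) a b.
Proof.
move=> HT ha hcb hb.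
case/andP: HT => _ /forallP /(_ (Ordinal ha)) /forallP /(_ (Ordinal hb)) /eqP Hc.
have : 0 < #|[set p in S | covers 2 3 p (Ordinal ha) (Ordinal hb)]| by rewrite Hc /= hcb.
case/card_gt0P => p; rewrite !inE covers_tr => /andP [pS cp]; by exists p.
Qed.

Lemma shiftTE c x y o : shiftT c (x, y, o) = (x, c + y, o).
Proof. by []. Qed.

Lemma coversN_shift c t a b : coversN (shiftT c t) a (c + b) = coversN t a b.
Proof.
case: t => [[x y] o]; rewrite shiftTE !coversNE.
apply/idP/idP => /and4P [? ? ? ?]; apply/and4P; split; lia.
Qed.

Lemma coversN_corner x y o : coversN (x, y, o) x y.
Proof. rewrite coversNE; apply/and4P; split; case: o => /=; lia. Qed.

Lemma shiftT_inj c : injective (shiftT c).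
Proof. move=> [[x y] o] [[x' y'] o'] [] -> /eqP; rewrite eqn_add2l => /eqP -> -> //. Qed.

Lemma inSP n (S : {set placement 7 n}) t : reflect (exists2 p, p \in S & tr p = t) (inS S t).
Proof.
apply: (iffP exists_inP) => [[p pS /eqP]|[p pS e]]; [by exists p | by exists p; rewrite ?e].
Qed.

Lemma step n c L (S : {set placement 7 n}) (K : seq trip) k :
  Tf c S -> c + L <= n -> all (fun t => inS S (shiftT c t)) K -> k < 7 * L ->
  (forall k', k' < k -> has (fun t => coversN t (k' %% 7) (k' %/ 7)) K) ->
  ~~ has (fun t => coversN t (k %% 7) (k %/ 7)) K ->
  exists o, okbr K (k %% 7) (k %/ 7) o && inS S (shiftT c (k %% 7, k %/ 7, o)).
Proof.
move=> HT hL /allP Kin hk Hbef Hnot.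
have ek := divn_eq k 7.
set i := k %% 7 in Hnot ek *; set j := k %/ 7 in Hnot ek *.
have hi : i < 7 by rewrite ltn_pmod.
have hj : j < L by rewrite ltn_divLR // mulnC.
have hcj : c + j < n by lia.
have [q qS] := Tf_ex HT hi (leq_addr j c) hcj.
case: q qS => [[x y] o] qS; have [hx hy hc] := Tf_valid HT qS.
change (tr (x, y, o)) with ((x : nat), (y : nat), o); rewrite coversNE => /and4P [c1 c2 c3 c4].
have Hcov : forall t, t \in K -> coversN (shiftT c t) i (c + j) -> False.
  move=> t tK; rewrite coversN_shift => ct; move/hasP: Hnot; apply; by exists t.
have Hin : forall t, t \in K -> coversN (shiftT c t) x y -> shiftT c t = ((x : nat), (y : nat), o).
  move=> t tK ct; have [p pS ep] := inSP _ _ (Kin t tK).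
  have := @Tf_uniq n c S p (x, y, o) x y HT pS qS; rewrite ep => /(_ ct).
  by move=> /(_ (coversN_corner _ _ _)) ep2; rewrite -ep ep2.
have exy : (x : nat) = i /\ (y : nat) = c + j.
  case: (boolP (((x : nat) == i) && ((y : nat) == c + j))) => [/andP [/eqP e1 /eqP e2]|ne]; first by split.
  exfalso.
  have hk2 : (y - c) * 7 + x < k by rewrite ek; move/nandP: ne => [/eqP|/eqP] ne; lia.
  have /hasP [t tK ct] := Hbef _ hk2.
  have e1 : ((y - c) * 7 + x) %% 7 = x by lia.
  have e2 : ((y - c) * 7 + x) %/ 7 = y - c by lia.
  rewrite e1 e2 -(coversN_shift c) subnKC // in ct.
  have := Hin t tK ct => et.
  apply: (Hcov t tK); rewrite et coversNE; apply/and4P; split; lia.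
case: exy => ex ey.
exists o; apply/andP; split; last first.
  by apply/inSP; exists (x, y, o) => //; rewrite /tr /= ex ey.
apply/andP; split; first by case: (o) hx; rewrite /= ex.
apply/allP => t tK; rewrite /disjN; apply/negP => /andP [d1 d2].
set a' := maxn _ _ in d1 d2; set b' := maxn _ _ in d1 d2.
rewrite -(coversN_shift c) in d1; rewrite -(coversN_shift c) in d2.
have etr : tr (x, y, o) = shiftT c (i, j, o) by rewrite /tr /= ex ey.
have [p pS ep] := inSP _ _ (Kin t tK).
have := @Tf_uniq n c S p (x, y, o) a' (c + b') HT pS qS; rewrite ep etr => /(_ d2 d1) epq.
have et : t = (i, j, o) by apply: (@shiftT_inj c); rewrite -ep epq etr.
move/hasP: Hnot; apply; exists t => //; rewrite et; exact: coversN_corner.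
Qed.

Lemma search_sound n c L (S : {set placement 7 n}) :
  Tf c S -> c + L <= n -> forall fuel (K : seq trip),
  all (fun t => inS S (shiftT c t)) K ->
  has (fun K' => all (fun t => inS S (shiftT c t)) K') (search fuel L K).
Proof.
move=> HT hL; elim=> [|f IH] K HK /=; first by rewrite HK.
case: ifP => hk; last by rewrite /= HK.
have hbef : forall k', k' < firstk L K -> has (fun t => coversN t (k' %% 7) (k' %/ 7)) K.
  move=> k' hk'; have := before_find 0 hk'; rewrite nth_iota; last by lia.
  by rewrite add0n => /negbFE.
have hnot : ~~ has (fun t => coversN t (firstk L K %% 7) (firstk L K %/ 7)) K.
  have hs : has (fun k => ~~ has (fun t => coversN t (k %% 7) (k %/ 7)) K) (iota 0 (7 * L)).
    by rewrite has_find size_iota.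
  by have := nth_find 0 hs; rewrite -/(firstk L K) nth_iota // add0n.
have [o /andP [ok inn]] := step HT hL HK hk hbef hnot.
rewrite has_cat; case: o ok inn => ok inn; apply/orP; [right|left]; rewrite ok;
  by apply: IH => /=; rewrite inn HK.
Qed.

Definition K1 : seq trip := [:: (4, 4, true); (2, 3, false); (0, 3, false);
              (4, 2, true); (4, 0, true); (2, 0, false); (0, 0, false)].
Definition K2 : seq trip := [:: (2, 4, true); (5, 3, false); (0, 3, false);
              (2, 2, true); (5, 0, false); (2, 0, true); (0, 0, false)].
Definition K3 : seq trip := [:: (0, 4, true); (5, 3, false); (3, 3, false);
              (0, 2, true); (5, 0, false); (3, 0, false); (0, 0, true)].

Lemma search_val : search 20 6 [::] = [:: K1; K2; K3].
Proof. by vm_compute. Qed.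

Lemma forced n c (S : {set placement 7 n}) :
  Tf c S -> c + 6 <= n ->
  exists2 K, K \in [:: K1; K2; K3] & all (fun t => inS S (shiftT c t)) K.
Proof.
move=> HT hL; have := search_sound HT hL 20 (K:=[::]) isT.
by rewrite search_val => /hasP [K KK HK]; exists K.
Qed.

Definition fitsK (K : seq trip) :=
  all (fun t => (t.1.1 + hh t.2 <= 7) && (t.1.2 + ww t.2 <= 6)) K.
Definition exactK (K : seq trip) :=
  all (fun k => count (fun t => coversN t (k %% 7) (k %/ 7)) K == 1) (iota 0 42).
Definition goodK K := [&& fitsK K, exactK K, uniq K & size K == 7].

Lemma goodKs : all goodK [:: K1; K2; K3].
Proof. by vm_compute. Qed.

Lemma realize n t : t.1.1 < 7 -> t.1.2 < n -> exists p : placement 7 n, tr p = t.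
Proof. by case: t => [[x y] o] /= hx hy; exists (Ordinal hx, Ordinal hy, o). Qed.

Lemma card_setOf n (s : seq trip) :
  uniq s -> all (fun t => (t.1.1 < 7) && (t.1.2 < n)) s -> #|setOf n s| = size s.
Proof.
move=> us /allP rs; rewrite cardE -(size_map (@tr n)); apply: perm_size.
apply: uniq_perm => //; first by rewrite map_inj_uniq ?enum_uniq //; exact: tr_inj.
move=> t; apply/mapP/idP => [[p] | ts].
  by rewrite mem_enum inE => ? ->.
have /andP [h1 h2] := rs t ts; have [p ep] := realize h1 h2.
by exists p => //; rewrite mem_enum inE ep.
Qed.

Lemma count_cov n (s : seq trip) (i : 'I_7) (j : 'I_n) :
  uniq s -> all (fun t => (t.1.1 < 7) && (t.1.2 < n)) s ->
  #|[set p in setOf n s | covers 2 3 p i j]| = count (fun t => coversN t i j) s.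
Proof.
move=> us rs.
have -> : [set p in setOf n s | covers 2 3 p i j] = setOf n [seq t <- s | coversN t i j].
  by apply/setP => p; rewrite !inE mem_filter covers_tr andbC.
rewrite card_setOf ?size_filter ?filter_uniq //.
by apply/allP => t; rewrite mem_filter => /andP [_ ts]; exact: (allP rs t ts).
Qed.

Definition Bset n c (K : seq trip) : {set placement 7 n} := setOf n (map (shiftT c) K).

Lemma validE n (x : 'I_7) (y : 'I_n) o :
  valid_placement 2 3 (x, y, o) = (x + hh o <= 7) && (y + ww o <= n).
Proof. by case: o; rewrite /= andbT. Qed.

Lemma Tf_intro n c (S : {set placement 7 n}) :
  (forall p, p \in S -> valid_placement 2 3 p && (c <= p.1.2)) ->
  (forall i j, #|[set p in S | covers 2 3 p i j]| = (c <= j)) -> Tf c S.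
Proof.
move=> H1 H2; apply/andP; split; first by apply/forall_inP.
by apply/forallP => i; apply/forallP => j; rewrite H2.
Qed.

Lemma Tf_count n c (S : {set placement 7 n}) i j :
  Tf c S -> #|[set p in S | covers 2 3 p i j]| = (c <= j).
Proof. by case/andP => _ /forallP /(_ i) /forallP /(_ j) /eqP. Qed.

Lemma B_real n c K : goodK K -> c + 6 <= n ->
  all (fun t => (t.1.1 < 7) && (t.1.2 < n)) (map (shiftT c) K).
Proof.
case/and4P => /allP hf _ _ _ hn; apply/allP => t /mapP [[[x y] o] tK ->].
have /andP [] := hf _ tK; rewrite /= => h1 h2.
by apply/andP; split; move: h1 h2; case: (o) => /= h1 h2; lia.
Qed.

Lemma B_uniq c K : goodK K -> uniq (map (shiftT c) K).
Proof. by case/and4P => _ _ u _; rewrite map_inj_uniq //; exact: shiftT_inj. Qed.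

Lemma B_card n c K : goodK K -> c + 6 <= n -> #|Bset n c K| = 7.
Proof.
move=> g hn; rewrite card_setOf ?size_map ?B_uniq ?B_real //.
by case/and4P: g => _ _ _ /eqP.
Qed.

Lemma B_mem n c K (x : 'I_7) (y : 'I_n) o : goodK K -> (x, y, o) \in Bset n c K ->
  [/\ x + hh o <= 7, c <= y & y + ww o <= c + 6].
Proof.
case/and4P => /allP hf _ _ _; rewrite inE => /mapP [[[x' y'] o'] tK].
rewrite /tr shiftTE /= => [[ex ey eo]].
have /andP [] := hf _ tK; rewrite /= ex ey eo => h1 h2; split => //; lia.
Qed.

Lemma B_count n c K (i : 'I_7) (j : 'I_n) : goodK K -> c + 6 <= n ->
  #|[set p in Bset n c K | covers 2 3 p i j]| = (c <= j < c + 6).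
Proof.
move=> g hn; rewrite count_cov ?B_uniq ?B_real // count_map.
case: (boolP (c <= j < c + 6)) => [/andP [h1 h2]|hj].
  have ej : (j : nat) = c + (j - c) by lia.
  rewrite ej (eq_count (a2 := fun t => coversN t i (j - c))); last by move=> t; exact: coversN_shift.
  case/and4P: g => _ /allP he _ _.
  have hk : (j - c) * 7 + i \in iota 0 42 by rewrite mem_iota; have := ltn_ord i; lia.
  have := he _ hk; have -> : ((j - c) * 7 + i) %% 7 = i by have := ltn_ord i; lia.
  have -> : ((j - c) * 7 + i) %/ 7 = j - c by have := ltn_ord i; lia.
  by move/eqP.
apply/eqP; rewrite -leqn0 leqNgt -has_count; apply/hasP => [[[[x y] o] tK]].
case/and4P: g => /allP hf _ _ _; have /andP [] := hf _ tK; rewrite /= => _ hw.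
move: hw; case: (o) => /= hw /and4P [_ _ ? ?]; move: hj; rewrite negb_and -!ltnNge; lia.
Qed.

Lemma cardsU_disj (T : finType) (A B : {set T}) : A :&: B = set0 -> #|A :|: B| = #|A| + #|B|.
Proof. by move=> H; rewrite cardsU H cards0 subn0. Qed.

Lemma B_sub n c K (S : {set placement 7 n}) :
  all (fun t => inS S (shiftT c t)) K -> Bset n c K \subset S.
Proof.
move=> /allP H; apply/subsetP => p; rewrite inE => /mapP [t tK ep].
have [q qS eq] := inSP _ _ (H t tK); rewrite -ep in eq.
by rewrite -(tr_inj eq).
Qed.

Lemma BT_disj n c K N (T : {set placement 7 n}) :
  goodK K -> T \in tilesFrom n (c + 6) N -> Bset n c K :&: T = set0.
Proof.
move=> g; rewrite inE => /andP [HT _]; apply/setP => -[[x y] o]; rewrite in_set0.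
apply/negP => /setIP [pB pT].
have [_ _ h1] := B_mem g pB; have [_ _ h2] := Tf_valid HT pT.
by move: h1; case: (o) => /=; lia.
Qed.

Lemma union_ok n c K N (T : {set placement 7 n}) :
  goodK K -> c + 6 <= n -> T \in tilesFrom n (c + 6) N ->
  Bset n c K :|: T \in tilesFrom n c (N + 7).
Proof.
move=> g hn /[dup] HTin; rewrite inE => /andP [HT /eqP cT].
have dj := BT_disj g HTin.
rewrite inE; apply/andP; split; last by rewrite cardsU_disj // B_card // cT addnC.
apply: Tf_intro.
  move=> [[x y] o]; rewrite validE => /setUP [pB|pT].
    by have [? ? ?] := B_mem g pB; rewrite -andbA; apply/and3P; split => //=; lia.
  by have [? ? ?] := Tf_valid HT pT; rewrite -andbA; apply/and3P; split => //=; lia.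
move=> i j.
have -> : [set p in Bset n c K :|: T | covers 2 3 p i j] =
   [set p in Bset n c K | covers 2 3 p i j] :|: [set p in T | covers 2 3 p i j].
  by apply/setP => p; rewrite !inE andb_orl.
rewrite cardsU_disj; last first.
  apply/setP => p; rewrite in_set0; apply/negP => /setIP []; rewrite !in_set => /andP [pB _] /andP [pT _].
  by move: dj => /setP /(_ p); rewrite !inE pB pT.
rewrite B_count // (Tf_count _ _ HT).
by case: (leqP c j); case: (leqP (c + 6) j) => /=; lia.
Qed.

Lemma diff_ok n c K N (S : {set placement 7 n}) :
  goodK K -> c + 6 <= n -> S \in tilesFrom n c (N + 7) -> Bset n c K \subset S ->
  S :\: Bset n c K \in tilesFrom n (c + 6) N.
Proof.
move=> g hn; rewrite inE => /andP [HS /eqP cS] sub.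
rewrite inE; apply/andP; split; last first.
  by rewrite cardsD (setIidPr sub) B_card // cS addnK.
apply: Tf_intro.
  move=> [[x y] o] /setDP [pS nB].
  have [h1 h2 h3] := Tf_valid HS pS.
  rewrite validE h1 h2 /=; rewrite leqNgt; apply/negP => hy.
  have hy' : y < c + 6 by [].
  have := B_count x y g hn.
  rewrite h3 hy' /= => Hc; have /cards1P [q /setP Hq] := introT eqP Hc.
  have := Hq q; rewrite in_set1 eqxx in_set => /andP [qB cq].
  have qS : q \in S by move/subsetP: sub; apply.
  have epq : q = (x, y, o).
    apply: (Tf_uniq (a := x) (b := y) HS qS pS); first by rewrite -covers_tr.
    exact: coversN_corner.
  by move: nB; rewrite -epq qB.
move=> i j.
have -> : [set p in S :\: Bset n c K | covers 2 3 p i j] =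
   [set p in S | covers 2 3 p i j] :\: [set p in Bset n c K | covers 2 3 p i j].
  by apply/setP => p; rewrite !inE; case: (tr p \in _); case: (p \in S); case: (covers _ _ _ _ _).
rewrite cardsD (setIidPr _); last first.
  by apply/subsetP => p /setIdP [pB cv]; apply/setIdP; split => //; exact: (subsetP sub).
rewrite B_count // (Tf_count _ _ HS).
by case: (leqP c j); case: (leqP (c + 6) j) => /=; lia.
Qed.

Lemma low_part n c K N (T : {set placement 7 n}) :
  goodK K -> T \in tilesFrom n (c + 6) N ->
  [set p in Bset n c K :|: T | p.1.2 < c + 6] = Bset n c K.
Proof.
move=> g; rewrite inE => /andP [HT _]; apply/setP => -[[x y] o].
rewrite in_set in_setU /=.
case: (boolP ((x, y, o) \in Bset n c K)) => pB /=.
  by have [_ _ h] := B_mem g pB; move: h; case: (o) => /=; lia.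
apply/negP => /andP [pT hy]; have [_ _ h] := Tf_valid HT pT; lia.
Qed.

Lemma Bset_neq n c K K' t : goodK K -> c + 6 <= n -> t \in K -> t \notin K' ->
  Bset n c K != Bset n c K'.
Proof.
move=> g hn tK tK'.
have /andP [h1 h2] := allP (B_real g hn) _ (map_f (shiftT c) tK).
have [p ep] := realize h1 h2.
apply/negP => /eqP /setP /(_ p); rewrite !inE ep map_f // (mem_map (@shiftT_inj c)).
by rewrite (negbTE tK').
Qed.

Lemma bool3 (b x y : bool) : b && y = false -> b && x = false -> b || x = b || y -> x = y.
Proof. by case: b; case: x; case: y. Qed.

Definition Aset n c N K : {set {set placement 7 n}} :=
  [set Bset n c K :|: T | T in tilesFrom n (c + 6) N].

Lemma Aset_card n c N K : goodK K -> #|Aset n c N K| = #|tilesFrom n (c + 6) N|.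
Proof.
move=> g; apply: card_in_imset => T1 T2 T1in T2in e.
have d1 := BT_disj g T1in; have d2 := BT_disj g T2in.
apply/setP => p; have := congr1 (fun X : {set placement 7 n} => p \in X) e; have := congr1 (fun X : {set placement 7 n} => p \in X) d1; have := congr1 (fun X : {set placement 7 n} => p \in X) d2.
rewrite !in_setU !in_setI !in_set0.
by apply: bool3.
Qed.

Lemma Aset_disj n c N K K' : goodK K -> goodK K' -> Bset n c K != Bset n c K' ->
  Aset n c N K :&: Aset n c N K' = set0.
Proof.
move=> g g' ne; apply/setP => S; rewrite in_set0; apply/negP => /setIP [].
move=> /imsetP [T Tin ->] /imsetP [T' T'in e].
have := low_part g Tin; rewrite e (low_part g' T'in) => e2.
by move: ne; rewrite e2 eqxx.
Qed.

Lemma rec_step n c N : c + 6 <= n ->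
  #|tilesFrom n c (N + 7)| = 3 * #|tilesFrom n (c + 6) N|.
Proof.
move=> hn.
have /and4P [g1 g2 g3 _] := goodKs.
have e : tilesFrom n c (N + 7) = Aset n c N K1 :|: Aset n c N K2 :|: Aset n c N K3.
  apply/setP => S; apply/idP/idP => [Sin|].
    have /[dup] Sin' := Sin; rewrite inE => /andP [HS _].
    have [K KK HK] := forced HS hn.
    have gK : goodK K by move: KK g1 g2 g3; rewrite !inE => /or3P [] /eqP ->.
    have sub := B_sub HK.
    have eS : S = Bset n c K :|: (S :\: Bset n c K).
      apply/setP => p; rewrite in_setU in_setD.
      by case: (boolP (p \in Bset n c K)) => //= /(subsetP sub) ->.
    have inA : S \in Aset n c N K.
      by rewrite eS; apply/imsetP; exists (S :\: Bset n c K) => //; exact: diff_ok.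
    rewrite !inE in KK.
    by case/or3P: KK => /eqP eK; rewrite !in_setU -eK inA ?orbT.
  by rewrite !in_setU -orbA => /or3P [] /imsetP [T Tin ->]; apply: union_ok.
have n12 : Bset n c K1 != Bset n c K2 by apply: (@Bset_neq _ _ _ _ (4, 4, true)).
have n13 : Bset n c K1 != Bset n c K3 by apply: (@Bset_neq _ _ _ _ (4, 4, true)).
have n23 : Bset n c K2 != Bset n c K3 by apply: (@Bset_neq _ _ _ _ (2, 4, true)).
rewrite e cardsU_disj; last by rewrite setIUl !Aset_disj // setU0.
rewrite cardsU_disj; last exact: Aset_disj.
by rewrite !Aset_card //; lia.
Qed.

Lemma base n : #|tilesFrom n n 0| = 1.
Proof.
have -> : tilesFrom n n 0 = [set set0].
  apply/setP => S; rewrite !inE; apply/idP/idP => [/andP [_ /eqP /cards0_eq ->] //|/eqP ->].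
  rewrite cards0 eqxx andbT; apply: Tf_intro => [p|i j]; first by rewrite in_set0.
  rewrite (_ : [set p in set0 | _] = set0) ?cards0; last by apply/setP => p; rewrite !inE.
  by rewrite leqNgt ltn_ord.
by rewrite cards1.
Qed.

Lemma count_main k : #|tilesFrom (6 * k) 0 (k * 7)| = 3 ^ k.
Proof.
suff H : forall j, j <= k -> #|tilesFrom (6 * k) (6 * (k - j)) (j * 7)| = 3 ^ j.
  by have := H k (leqnn k); rewrite subnn.
elim=> [|j IH] hj; first by rewrite subn0 base.
have e1 : 6 * (k - j) = 6 * (k - j.+1) + 6 by lia.
rewrite (_ : j.+1 * 7 = j * 7 + 7); last by lia.
rewrite rec_step; last by lia.
by rewrite -e1 IH ?expnS //; lia.
Qed.

Lemma ntil_tiles n N : ntilings 7 n 2 3 N = #|tilesFrom n 0 N|.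
Proof.
rewrite /ntilings /tilesFrom; congr #|pred_of_set _|; apply/setP => S; rewrite !inE.
congr andb; rewrite /is_tiling /Tf; congr andb.
by apply: eq_forallb => p; rewrite leq0n andbT.
Qed.

Theorem mainTheorem10 : forall N : nat,
  T_tilings 2 3 7 N = (if 7 %| N then 3 ^ (N %/ 7) else 0).
Proof.
move=> N; rewrite /T_tilings.
have -> : 2 * 3 * N = 6 * N by [].
rewrite Gauss_dvdr //.
case: (boolP (7 %| N)) => // /dvdnP [k ->].
rewrite mulnK // (_ : 6 * (k * 7) = 6 * k * 7) ?mulnA // mulnK //.
by rewrite ntil_tiles count_main.
Qed.
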